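(* Let $a_1,a_2\in\mathbb{R}$ with $|a_1a_2|=1$, $a_2>0$ and $a_1<0$, and let $$R=\begin{pmatrix} 1 & a_1 \\ a_2 & 1 \end{pmatrix}.$$ Then for every driving function $f$ the Skorokhod problem with matrix $R$ has a unique solution.
   Context: For $b=(b_1,b_2)\in\mathbb{R}^2$ write $b\ge 0$ if $b_1\ge 0$ and $b_2\ge 0$, and let $D=\{b\in\mathbb{R}^2: b\ge 0\}$. A driving function is a continuous function $f:[0,\infty)\to\mathbb{R}^2$ with $f(0)\ge 0$. Given a real $2\times 2$ matrix $R$ and a driving function $f$, a solution of the Skorokhod problem is a pair $(g,m)$ where (1) $g:[0,\infty)\to D$ is continuous; (2) $m=(m_1,m_2):[0,\infty)\to\mathbb{R}^2$ is continuous with $m(0)=0$ and each $m_j$ non-decreasing; (3) $g(t)=f(t)+Rm(t)$ for all $t\ge 0$; and (4) for $j=1,2$, $m_j$ increases only when $g_j=0$, i.e. $\int_0^\infty g_j(t)\,dm_j(t)=0$. ''Unique solution'' means there is exactly one such pair $(g,m)$. *)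

(* Defs.v *)
(* concrete reals R. Functions on [0,oo) are represented as
   functions R -> R whose values for t < 0 are irrelevant. *)
From Stdlib Require Import Reals.
Open Scope R_scope.

Definition cont_nonneg (h : R -> R) : Prop :=
  forall t, 0 <= t -> forall eps, 0 < eps ->
    exists delta, 0 < delta /\
      forall s, 0 <= s -> Rabs (s - t) < delta -> Rabs (h s - h t) < eps.

Definition nondecr_nonneg (h : R -> R) : Prop :=
  forall s t, 0 <= s -> s <= t -> h s <= h t.

(* "m increases only when g = 0": whenever m strictly increases over [s,t],
   g vanishes somewhere in [s,t]  (for continuous g >= 0 and nondecreasing
   continuous m this is equivalent to  int_0^oo g dm = 0). *)
Definition increases_only_at_zero (g m : R -> R) : Prop :=
  forall s t, 0 <= s -> s <= t -> m s < m t ->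
    exists u, s <= u <= t /\ g u = 0.

Definition driving (f1 f2 : R -> R) : Prop :=
  cont_nonneg f1 /\ cont_nonneg f2 /\ 0 <= f1 0 /\ 0 <= f2 0.

Definition SP_solution (r11 r12 r21 r22 : R) (f1 f2 g1 g2 m1 m2 : R -> R)
  : Prop :=
  cont_nonneg g1 /\ cont_nonneg g2 /\
  (forall t, 0 <= t -> 0 <= g1 t /\ 0 <= g2 t) /\
  cont_nonneg m1 /\ cont_nonneg m2 /\ m1 0 = 0 /\ m2 0 = 0 /\
  nondecr_nonneg m1 /\ nondecr_nonneg m2 /\
  (forall t, 0 <= t ->
     g1 t = f1 t + (r11 * m1 t + r12 * m2 t) /\
     g2 t = f2 t + (r21 * m1 t + r22 * m2 t)) /\
  increases_only_at_zero g1 m1 /\ increases_only_at_zero g2 m2.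

Definition SP_unique_solution (r11 r12 r21 r22 : R) (f1 f2 : R -> R) : Prop :=
  (exists g1 g2 m1 m2, SP_solution r11 r12 r21 r22 f1 f2 g1 g2 m1 m2) /\
  (forall g1 g2 m1 m2 g1' g2' m1' m2',
     SP_solution r11 r12 r21 r22 f1 f2 g1 g2 m1 m2 ->
     SP_solution r11 r12 r21 r22 f1 f2 g1' g2' m1' m2' ->
     forall t, 0 <= t ->
       g1 t = g1' t /\ g2 t = g2' t /\ m1 t = m1' t /\ m2 t = m2' t).

(* Main.v *)
Require Import Defs.
From Stdlib Require Import Reals Lra Lia ClassicalEpsilon Classical.
Open Scope R_scope.

Lemma abs_le_iff x y : Rabs x <= y <-> -y <= x <= y.
Proof. unfold Rabs; destruct (Rcase_abs x); split; intros; lra. Qed.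
Lemma abs_lt_iff x y : Rabs x < y <-> -y < x < y.
Proof. unfold Rabs; destruct (Rcase_abs x); split; intros; lra. Qed.

Lemma cont_ext f g : (forall t, 0 <= t -> f t = g t) -> cont_nonneg f -> cont_nonneg g.
Proof.
  intros E Hf t Ht eps He.
  destruct (Hf t Ht eps He) as [d [Hd H]].
  exists d; split; auto. intros s Hs Hst. rewrite <- !E by auto. auto.
Qed.

Lemma cont_const c : cont_nonneg (fun _ => c).
Proof.
  intros t Ht eps He. exists 1; split; [lra|]. intros. replace (c - c) with 0 by ring.
  rewrite Rabs_R0; lra.
Qed.

Lemma cont_plus f g : cont_nonneg f -> cont_nonneg g -> cont_nonneg (fun t => f t + g t).
Proof.
  intros Hf Hg t Ht eps He.
  destruct (Hf t Ht (eps/2)) as [d1 [Hd1 H1]]; [lra|].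
  destruct (Hg t Ht (eps/2)) as [d2 [Hd2 H2]]; [lra|].
  exists (Rmin d1 d2); split; [apply Rmin_pos; lra|].
  intros s Hs Hst.
  assert (A1 := H1 s Hs (Rlt_le_trans _ _ _ Hst (Rmin_l _ _))).
  assert (A2 := H2 s Hs (Rlt_le_trans _ _ _ Hst (Rmin_r _ _))).
  apply abs_lt_iff in A1; apply abs_lt_iff in A2; apply abs_lt_iff; lra.
Qed.

Lemma cont_scal c f : cont_nonneg f -> cont_nonneg (fun t => c * f t).
Proof.
  intros Hf t Ht eps He.
  pose proof (Rabs_pos c) as Hc.
  destruct (Hf t Ht (eps / (Rabs c + 1))) as [d [Hd H]].
  { apply Rdiv_lt_0_compat; lra. }
  exists d; split; auto. intros s Hs Hst.
  replace (c * f s - c * f t) with (c * (f s - f t)) by ring.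
  rewrite Rabs_mult.
  assert (Hlt := H s Hs Hst).
  pose proof (Rabs_pos (f s - f t)).
  apply Rle_lt_trans with (Rabs c * (eps / (Rabs c + 1))).
  - apply Rmult_le_compat_l; lra.
  - replace (Rabs c * (eps / (Rabs c + 1))) with (eps * (Rabs c / (Rabs c + 1))) by (field; lra).
    assert (Rabs c / (Rabs c + 1) < 1).
    { apply Rmult_lt_reg_r with (Rabs c + 1); [lra|]. unfold Rdiv. rewrite Rmult_assoc, Rinv_l; lra. }
    nra.
Qed.

Lemma cont_lin f g a b : cont_nonneg f -> cont_nonneg g -> cont_nonneg (fun t => a * f t + b * g t).
Proof. intros. apply cont_plus; apply cont_scal; auto. Qed.

Lemma cont_sub_scal f g b : cont_nonneg f -> cont_nonneg g -> cont_nonneg (fun t => f t - b * g t).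
Proof.
  intros Hf Hg. apply cont_ext with (fun t => 1 * f t + (- b) * g t).
  intros; ring. apply cont_lin; auto.
Qed.

Lemma cont_add_scal f g b : cont_nonneg f -> cont_nonneg g -> cont_nonneg (fun t => f t + b * g t).
Proof.
  intros Hf Hg. apply cont_ext with (fun t => 1 * f t + b * g t).
  intros; ring. apply cont_lin; auto.
Qed.

Definition ext (f : R -> R) (s : R) := f (Rmax 0 s).

Lemma Rmax0_lip s t : Rabs (Rmax 0 s - Rmax 0 t) <= Rabs (s - t).
Proof.
  unfold Rmax; destruct (Rle_dec 0 s), (Rle_dec 0 t);
  apply abs_le_iff; unfold Rabs; destruct (Rcase_abs (s - t)); lra.
Qed.

Lemma cont_ext_pt f : cont_nonneg f -> forall c, continuity_pt (ext f) c.
Proof.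
  intros Hf c. unfold continuity_pt, continue_in, limit1_in, limit_in. simpl. unfold Rdist.
  intros eps He.
  destruct (Hf (Rmax 0 c) (Rmax_l 0 c) eps He) as [d [Hd H]].
  exists d; split; [lra|]. intros x [_ Hx]. unfold ext.
  apply H. apply Rmax_l. eapply Rle_lt_trans; [apply Rmax0_lip|exact Hx].
Qed.

Lemma bounded_on f T : cont_nonneg f -> 0 <= T -> exists B, forall s, 0 <= s <= T -> Rabs (f s) <= B.
Proof.
  intros Hf HT.
  destruct (continuity_ab_maj (ext f) 0 T HT (fun c _ => cont_ext_pt f Hf c)) as [M1 [H1 _]].
  assert (Hf' : cont_nonneg (fun s => (-1) * f s)) by (apply cont_scal; auto).
  destruct (continuity_ab_maj (ext (fun s => (-1) * f s)) 0 T HT (fun c _ => cont_ext_pt _ Hf' c)) as [M2 [H2 _]].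
  exists (Rmax (ext f M1) (ext (fun s => (-1) * f s) M2)).
  intros s Hs. specialize (H1 s Hs); specialize (H2 s Hs). unfold ext in *.
  rewrite Rmax_right in H1, H2 by lra.
  pose proof (Rmax_l (f (Rmax 0 M1)) ((-1) * f (Rmax 0 M2))).
  pose proof (Rmax_r (f (Rmax 0 M1)) ((-1) * f (Rmax 0 M2))).
  apply abs_le_iff. lra.
Qed.

Definition PS (x : R -> R) (t : R) (y : R) : Prop := y = 0 \/ exists s, 0 <= s <= t /\ y = - x s.
Definition Phi (x : R -> R) (t : R) : R := epsilon (inhabits 0) (fun M => is_lub (PS x t) M).

Lemma Phi_spec x t : cont_nonneg x -> is_lub (PS x t) (Phi x t).
Proof.
  intros Hx. unfold Phi. apply epsilon_spec.
  destruct (Rle_dec 0 t) as [Ht|Ht].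
  - destruct (bounded_on x t Hx Ht) as [B HB].
    destruct (completeness (PS x t)) as [m Hm].
    + exists B. intros y [Hy|[s [Hs Hy]]]; subst.
      * pose proof (HB 0 (conj (Rle_refl 0) Ht)). pose proof (Rabs_pos (x 0)). lra.
      * specialize (HB s Hs); apply abs_le_iff in HB; lra.
    + exists 0; left; reflexivity.
    + exists m; exact Hm.
  - destruct (completeness (PS x t)) as [m Hm].
    + exists 0. intros y [Hy|[s [Hs Hy]]]; lra.
    + exists 0; left; auto.
    + exists m; auto.
Qed.

Lemma Phi_ge0 x t : cont_nonneg x -> 0 <= Phi x t.
Proof. intros Hx. destruct (Phi_spec x t Hx) as [H _]. apply H. left; auto. Qed.

Lemma Phi_ge x t s : cont_nonneg x -> 0 <= s <= t -> - x s <= Phi x t.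
Proof. intros Hx Hs. destruct (Phi_spec x t Hx) as [H _]. apply H. right; eauto. Qed.

Lemma Phi_le x t K : cont_nonneg x -> 0 <= K -> (forall s, 0 <= s <= t -> - x s <= K) -> Phi x t <= K.
Proof.
  intros Hx HK H. destruct (Phi_spec x t Hx) as [_ H2]. apply H2.
  intros y [Hy|[s [Hs Hy]]]; subst; auto.
Qed.

Lemma Phi_mono x t t' : cont_nonneg x -> t <= t' -> Phi x t <= Phi x t'.
Proof.
  intros Hx Ht. apply Phi_le; auto. apply Phi_ge0; auto.
  intros s Hs. apply Phi_ge; auto; lra.
Qed.

Lemma Phi_lip x y t c : cont_nonneg x -> cont_nonneg y -> 0 <= c ->
  (forall s, 0 <= s <= t -> Rabs (x s - y s) <= c) -> Rabs (Phi x t - Phi y t) <= c.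
Proof.
  intros Hx Hy Hc H. apply abs_le_iff.
  assert (A : Phi x t <= Phi y t + c).
  { apply Phi_le; auto. pose proof (Phi_ge0 y t Hy); lra.
    intros s Hs. specialize (H s Hs). apply abs_le_iff in H. pose proof (Phi_ge y t s Hy Hs). lra. }
  assert (B : Phi y t <= Phi x t + c).
  { apply Phi_le; auto. pose proof (Phi_ge0 x t Hx); lra.
    intros s Hs. specialize (H s Hs). apply abs_le_iff in H. pose proof (Phi_ge x t s Hx Hs). lra. }
  lra.
Qed.

Lemma Phi_cont x : cont_nonneg x -> cont_nonneg (Phi x).
Proof.
  intros Hx t Ht eps He.
  destruct (Hx t Ht (eps/3)) as [d [Hd H]]; [lra|].
  exists d; split; auto. intros s Hs Hst. apply abs_lt_iff.
  destruct (Rle_dec t s) as [Hts|Hts].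
  - assert (Phi x t <= Phi x s) by (apply Phi_mono; auto).
    assert (Phi x s <= Phi x t + eps/3).
    { apply Phi_le; auto. pose proof (Phi_ge0 x t Hx); lra.
      intros r Hr. destruct (Rle_dec r t).
      - pose proof (Phi_ge x t r Hx (conj (proj1 Hr) r0)). lra.
      - assert (Rabs (r - t) < d) by (apply abs_lt_iff; apply abs_lt_iff in Hst; lra).
        specialize (H r (proj1 Hr) H1). apply abs_lt_iff in H.
        pose proof (Phi_ge x t t Hx (conj Ht (Rle_refl t))). lra. }
    lra.
  - assert (Phi x s <= Phi x t) by (apply Phi_mono; auto; lra).
    assert (Phi x t <= Phi x s + 2*eps/3).
    { apply Phi_le; auto. pose proof (Phi_ge0 x s Hx); lra.
      intros r Hr. destruct (Rle_dec r s).
      - pose proof (Phi_ge x s r Hx (conj (proj1 Hr) r0)). lra.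
      - assert (Rabs (r - t) < d) by (apply abs_lt_iff; apply abs_lt_iff in Hst; lra).
        pose proof (H s Hs Hst) as H2. apply abs_lt_iff in H2.
        specialize (H r (proj1 Hr) H1). apply abs_lt_iff in H.
        pose proof (Phi_ge x s s Hx (conj Hs (Rle_refl s))). lra. }
    lra.
Qed.

Lemma Phi_comp x s t : cont_nonneg x -> 0 <= s <= t -> Phi x s < Phi x t ->
  exists u, s <= u <= t /\ x u + Phi x u = 0.
Proof.
  intros Hx Hst Hlt.
  assert (Hx' : cont_nonneg (fun r => (-1) * x r)) by (apply cont_scal; auto).
  destruct (continuity_ab_maj (ext (fun r => (-1) * x r)) s t (proj2 Hst) (fun c _ => cont_ext_pt _ Hx' c)) as [u [Hu Hu2]].
  unfold ext in Hu. rewrite (Rmax_right 0 u) in Hu by lra.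
  assert (Phi x t <= Rmax (Phi x s) (- x u)).
  { apply Phi_le; auto. pose proof (Phi_ge0 x s Hx). pose proof (Rmax_l (Phi x s) (- x u)); lra.
    intros r Hr. pose proof (Rmax_l (Phi x s) (- x u)). pose proof (Rmax_r (Phi x s) (- x u)).
    destruct (Rle_dec r s).
    - pose proof (Phi_ge x s r Hx (conj (proj1 Hr) r0)). lra.
    - specialize (Hu r (conj (Rlt_le _ _ (Rnot_le_lt _ _ n)) (proj2 Hr))).
      rewrite (Rmax_right 0 r) in Hu by lra. lra. }
  exists u; split; auto.
  assert (Phi x t <= - x u).
  { unfold Rmax in H; destruct (Rle_dec (Phi x s) (- x u)); lra. }
  pose proof (Phi_ge x u u Hx (conj (ltac:(lra) : 0 <= u) (Rle_refl u))).
  pose proof (Phi_mono x u t Hx (proj2 Hu2)).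
  lra.
Qed.
Lemma last_zero g m s0 t : cont_nonneg g -> cont_nonneg m -> nondecr_nonneg m ->
  increases_only_at_zero g m ->
  0 <= s0 <= t -> m s0 < m t -> exists s, s0 <= s <= t /\ g s = 0 /\ m s = m t.
Proof.
  intros Hg Hm Hmon Hz Hst Hlt.
  set (Z := fun u => s0 <= u <= t /\ g u = 0).
  assert (Hne : exists u, Z u).
  { destruct (Hz s0 t (proj1 Hst) (proj2 Hst) Hlt) as [u [Hu Hgu]]. exists u; split; auto. }
  destruct (completeness Z) as [ss [Hub Hlub]].
  - exists t. intros u [Hu _]. lra.
  - exact Hne.
  - destruct Hne as [u0 Hu0].
    assert (H1 : u0 <= ss) by (apply Hub; auto).
    assert (H2 : ss <= t) by (apply Hlub; intros u [Hu _]; lra).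
    assert (Hs0 : s0 <= ss) by (destruct Hu0 as [Hu0 _]; lra).
    assert (Hg0 : g ss = 0).
    { apply NNPP; intro Hn.
      assert (Hp : 0 < Rabs (g ss)) by (apply Rabs_pos_lt; auto).
      destruct (Hg ss ltac:(lra) _ Hp) as [d [Hd Hc]].
      assert (exists u, Z u /\ ss - d/2 < u) as [u [Hu Hu2]].
      { apply NNPP; intro Hn2.
        assert (is_upper_bound Z (ss - d/2)).
        { intros u Hu. apply Rnot_lt_le. intro. apply Hn2. eauto. }
        specialize (Hlub _ H). lra. }
      assert (u <= ss) by (apply Hub; auto).
      destruct Hu as [Hu Hgu].
      assert (Rabs (u - ss) < d) by (apply abs_lt_iff; lra).
      specialize (Hc u ltac:(lra) H0). rewrite Hgu in Hc.
      replace (0 - g ss) with (- g ss) in Hc by ring. rewrite Rabs_Ropp in Hc. lra. }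
    exists ss; split; [lra|split; auto].
    assert (Hle : m ss <= m t) by (apply Hmon; lra).
    apply NNPP; intro Hn.
    assert (Hlt2 : m ss < m t) by lra.
    assert (Hp : 0 < m t - m ss) by lra.
    destruct (Hm ss ltac:(lra) _ Hp) as [d [Hd Hc]].
    set (u := Rmin t (ss + d/2)).
    assert (Hu1 : ss < u \/ ss = t).
    { unfold u, Rmin; destruct (Rle_dec t (ss + d/2)); lra. }
    destruct Hu1 as [Hu1|Hu1]; [|subst; lra].
    assert (Hu2 : u <= t) by apply Rmin_l.
    assert (Hu3 : u <= ss + d/2) by apply Rmin_r.
    assert (Rabs (u - ss) < d) by (apply abs_lt_iff; lra).
    specialize (Hc u ltac:(lra) H). apply abs_lt_iff in Hc.
    destruct (Hz u t ltac:(lra) Hu2 ltac:(lra)) as [v [Hv Hgv]].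
    assert (v <= ss) by (apply Hub; split; auto; lra).
    lra.
Qed.

Lemma incr_bound g m f cp r s eta K :
  cont_nonneg g -> cont_nonneg m -> nondecr_nonneg m -> increases_only_at_zero g m ->
  (forall t, 0 <= t -> 0 <= g t) ->
  (forall t, 0 <= t -> g t = f t + (m t + cp t)) ->
  0 <= r <= s ->
  (forall u, r <= u <= s -> cp r - cp u <= K) ->
  (forall u, r <= u <= s -> f r - f u <= eta) ->
  m s - m r <= eta + K.
Proof.
  intros Hg Hm Hmon Hz Hpos Heq Hrs HK Heta.
  pose proof (HK r (conj (Rle_refl r) (proj2 Hrs))) as K0.
  pose proof (Heta r (conj (Rle_refl r) (proj2 Hrs))) as E0.
  destruct (Rlt_dec (m r) (m s)) as [Hlt|Hnlt].
  - destruct (last_zero g m r s Hg Hm Hmon Hz Hrs Hlt) as [u [Hu [Hgu Hmu]]].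
    pose proof (Heq u ltac:(lra)) as Eu. pose proof (Heq r ltac:(lra)) as Er.
    pose proof (Hpos r ltac:(lra)).
    specialize (HK u Hu). specialize (Heta u Hu). lra.
  - lra.
Qed.

Lemma chain_abs (D E : R -> R) T err x d :
  0 <= err -> 0 < x -> 0 < d ->
  (forall t, 0 <= t <= T -> D t > 0 -> exists s, 0 <= s <= t /\ E s >= D t - err) ->
  (forall t, 0 <= t <= T -> E t > 0 -> exists s, 0 <= s <= t /\ - D s >= E t) ->
  (forall t, 0 <= t <= T -> D t < 0 -> exists s, 0 <= s <= t /\ - E s >= - D t - err) ->
  (forall t, 0 <= t <= T -> E t < 0 -> exists s, 0 <= s <= t /\ D s >= - E t) ->
  (forall r s, 0 <= r <= T -> 0 <= s <= T -> Rabs (r - s) < d -> Rabs (D r - D s) < x) ->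
  forall n t z, 0 <= t <= T -> x/2 + 4 * INR n * err <= z -> z <= D t -> INR n * d <= t.
Proof.
  intros He Hx Hd H1 H2 H3 H4 Hmod n.
  induction n as [|n IH]; intros t z Ht Hz HD.
  - simpl. lra.
  - rewrite S_INR in *.
    assert (0 <= INR n) by apply pos_INR.
    assert (0 <= INR n * err) by (apply Rmult_le_pos; lra).
    destruct (H1 t Ht ltac:(lra)) as [s1 [Hs1 E1]].
    destruct (H2 s1 ltac:(lra) ltac:(lra)) as [s2 [Hs2 E2]].
    destruct (H3 s2 ltac:(lra) ltac:(lra)) as [s3 [Hs3 E3]].
    destruct (H4 s3 ltac:(lra) ltac:(lra)) as [s4 [Hs4 E4]].
    assert (INR n * d <= s4) by (apply (IH s4 (z - 2 * err)); lra).
    assert (t - s2 >= d).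
    { apply Rnot_lt_ge; intro Hc.
      assert (Rabs (t - s2) < d) by (apply abs_lt_iff; lra).
      specialize (Hmod t s2 Ht ltac:(lra) H6). apply abs_lt_iff in Hmod. lra. }
    lra.
Qed.

Lemma chain_bound (D E : R -> R) T err x d n :
  0 <= err -> 0 < x -> 0 < d ->
  (forall t, 0 <= t <= T -> D t > 0 -> exists s, 0 <= s <= t /\ E s >= D t - err) ->
  (forall t, 0 <= t <= T -> E t > 0 -> exists s, 0 <= s <= t /\ - D s >= E t) ->
  (forall t, 0 <= t <= T -> D t < 0 -> exists s, 0 <= s <= t /\ - E s >= - D t - err) ->
  (forall t, 0 <= t <= T -> E t < 0 -> exists s, 0 <= s <= t /\ D s >= - E t) ->
  (forall r s, 0 <= r <= T -> 0 <= s <= T -> Rabs (r - s) < d -> Rabs (D r - D s) < x) ->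
  T < INR n * d ->
  forall t, 0 <= t <= T -> D t < x/2 + 4 * INR n * err.
Proof.
  intros He Hx Hd H1 H2 H3 H4 Hmod HT t Ht.
  apply Rnot_le_lt; intro Hc.
  pose proof (chain_abs D E T err x d He Hx Hd H1 H2 H3 H4 Hmod n t (D t) Ht Hc (Rle_refl _)).
  lra.
Qed.

Lemma chain_bound2 (D E : R -> R) T err x d n :
  0 <= err -> 0 < x -> 0 < d ->
  (forall t, 0 <= t <= T -> D t > 0 -> exists s, 0 <= s <= t /\ E s >= D t - err) ->
  (forall t, 0 <= t <= T -> E t > 0 -> exists s, 0 <= s <= t /\ - D s >= E t) ->
  (forall t, 0 <= t <= T -> D t < 0 -> exists s, 0 <= s <= t /\ - E s >= - D t - err) ->
  (forall t, 0 <= t <= T -> E t < 0 -> exists s, 0 <= s <= t /\ D s >= - E t) ->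
  (forall r s, 0 <= r <= T -> 0 <= s <= T -> Rabs (r - s) < d -> Rabs (D r - D s) < x) ->
  T < INR n * d -> 4 * INR n * err <= x / 2 ->
  forall t, 0 <= t <= T -> Rabs (D t) < x /\ Rabs (E t) < x.
Proof.
  intros He Hx Hd H1 H2 H3 H4 Hmod HT Herr.
  assert (A : forall t, 0 <= t <= T -> D t < x/2 + 4 * INR n * err)
    by (apply (chain_bound D E T err x d n); auto).
  assert (B : forall t, 0 <= t <= T -> - D t < x/2 + 4 * INR n * err).
  { apply (chain_bound (fun t => - D t) (fun t => - E t) T err x d n); auto.
    - intros t Ht Hp. destruct (H3 t Ht ltac:(lra)) as [s [Hs Hs2]]. exists s; split; auto.
    - intros t Ht Hp. destruct (H4 t Ht ltac:(lra)) as [s [Hs Hs2]]. exists s; split; auto; lra.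
    - intros t Ht Hp. destruct (H1 t Ht ltac:(lra)) as [s [Hs Hs2]]. exists s; split; auto; lra.
    - intros t Ht Hp. destruct (H2 t Ht ltac:(lra)) as [s [Hs Hs2]]. exists s; split; auto; lra.
    - intros r s Hr Hs Hrs. replace (- D r - - D s) with (- (D r - D s)) by ring.
      rewrite Rabs_Ropp. auto. }
  intros t Ht. split.
  - apply abs_lt_iff. pose proof (A t Ht); pose proof (B t Ht). lra.
  - apply abs_lt_iff. split.
    + apply Rnot_le_lt; intro Hc.
      destruct (H4 t Ht ltac:(lra)) as [s [Hs Hs2]].
      pose proof (A s ltac:(lra)). lra.
    + apply Rnot_le_lt; intro Hc.
      destruct (H2 t Ht ltac:(lra)) as [s [Hs Hs2]].
      pose proof (B s ltac:(lra)). lra.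
Qed.

Lemma ucauchy_limit (u : nat -> R -> R) :
  (forall T eps, 0 <= T -> 0 < eps -> exists N, forall n m, (N <= n)%nat -> (N <= m)%nat ->
      forall s, 0 <= s <= T -> Rabs (u n s - u m s) <= eps) ->
  exists U, forall T eps, 0 <= T -> 0 < eps -> exists N, forall n, (N <= n)%nat ->
      forall s, 0 <= s <= T -> Rabs (u n s - U s) <= eps.
Proof.
  intros H.
  set (U := fun s => epsilon (inhabits 0) (fun l => Un_cv (fun n => u n s) l)).
  assert (HU : forall s, 0 <= s -> Un_cv (fun n => u n s) (U s)).
  { intros s Hs. unfold U. apply epsilon_spec.
    assert (Cauchy_crit (fun n => u n s)).
    { intros eps He. destruct (H s (eps/2) Hs ltac:(lra)) as [N HN]. exists N. intros n m Hn Hm.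
      unfold Rdist. specialize (HN n m Hn Hm s (conj Hs (Rle_refl s))). lra. }
    destruct (R_complete _ H0) as [l Hl]. exists l; exact Hl. }
  exists U. intros T eps HT He. destruct (H T eps HT He) as [N HN]. exists N.
  intros n Hn s Hs.
  apply Rnot_lt_le; intro Hc.
  destruct (HU s (proj1 Hs) (Rabs (u n s - U s) - eps) ltac:(lra)) as [N2 HN2].
  specialize (HN2 (max N N2) (Nat.le_max_r _ _)). unfold Rdist in HN2.
  specialize (HN n (max N N2) Hn (Nat.le_max_l _ _) s Hs).
  pose proof (Rabs_triang (u n s - u (max N N2) s) (u (max N N2) s - U s)) as H0.
  replace (u n s - u (max N N2) s + (u (max N N2) s - U s)) with (u n s - U s) in H0 by ring.
  lra.
Qed.

Lemma ulim_cont (u : nat -> R -> R) U : (forall n, cont_nonneg (u n)) ->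
  (forall T eps, 0 <= T -> 0 < eps -> exists N, forall n, (N <= n)%nat ->
     forall s, 0 <= s <= T -> Rabs (u n s - U s) <= eps) ->
  cont_nonneg U.
Proof.
  intros Hc HU t Ht eps He.
  destruct (HU (t + 1) (eps/4) ltac:(lra) ltac:(lra)) as [N HN].
  destruct (Hc N t Ht (eps/4) ltac:(lra)) as [d [Hd Hd2]].
  exists (Rmin d 1); split; [apply Rmin_pos; lra|].
  intros s Hs Hst. pose proof (Rmin_l d 1). pose proof (Rmin_r d 1).
  assert (Hs1: Rabs (s - t) < d) by lra.
  specialize (Hd2 s Hs Hs1). apply abs_lt_iff in Hst.
  pose proof (HN N (le_n N) s ltac:(lra)) as H1. pose proof (HN N (le_n N) t ltac:(lra)) as H2.
  apply abs_lt_iff in Hd2. apply abs_le_iff in H1. apply abs_le_iff in H2. apply abs_lt_iff. lra.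
Qed.

Lemma eq_of_small a b K : 0 < K -> (forall eps, 0 < eps -> Rabs (a - b) <= K * eps) -> a = b.
Proof.
  intros HK H. apply NNPP; intro Hn.
  assert (Hp : 0 < Rabs (a - b)) by (apply Rabs_pos_lt; lra).
  specialize (H (Rabs (a - b) / (2 * K))).
  assert (0 < Rabs (a - b) / (2 * K)) by (apply Rdiv_lt_0_compat; lra).
  specialize (H H0).
  replace (K * (Rabs (a - b) / (2 * K))) with (Rabs (a - b) / 2) in H by (field; lra).
  lra.
Qed.

Lemma mul_nonpos a b : 0 <= a -> b <= 0 -> a * b <= 0.
Proof. intros; nra. Qed.

Section Main.
Variables (a2 c : R) (f1 f2 : R -> R).
Hypothesis Hc : 0 < c.
Hypothesis Hca : c * a2 = 1.
Hypothesis Ha2 : 0 < a2.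
Hypothesis Hf : driving f1 f2.

Definition SPs r g1 g2 m1 m2 := SP_solution 1 r a2 1 f1 f2 g1 g2 m1 m2.

Lemma sp_nonneg r g1 g2 m1 m2 : SPs r g1 g2 m1 m2 -> forall t, 0 <= t -> 0 <= m1 t /\ 0 <= m2 t.
Proof.
  intros (Hg1 & Hg2 & Hpos & Hm1 & Hm2 & H10 & H20 & Hmon1 & Hmon2 & Heq & Hz1 & Hz2) t Ht.
  split; [rewrite <- H10 | rewrite <- H20]; [apply Hmon1|apply Hmon2]; lra.
Qed.

Lemma chain1 r r' g1 g2 m1 m2 g1' g2' m1' m2' T M t :
  -c <= r <= 0 -> -c <= r' <= 0 -> SPs r g1 g2 m1 m2 -> SPs r' g1' g2' m1' m2' ->
  (forall s, 0 <= s <= T -> m2' s <= M) -> 0 <= t <= T -> m1 t - m1' t > 0 ->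
  exists s, 0 <= s <= t /\ c * (m2 s - m2' s) >= (m1 t - m1' t) - (c + r') * M.
Proof.
  intros Hr Hr' HS HS' HM Ht Hp.
  pose proof (sp_nonneg _ _ _ _ _ HS) as N. pose proof (sp_nonneg _ _ _ _ _ HS') as N'.
  destruct HS as (Hg1 & Hg2 & Hpos & Hm1 & Hm2 & H10 & H20 & Hmon1 & Hmon2 & Heq & Hz1 & Hz2).
  destruct HS' as (Hg1' & Hg2' & Hpos' & Hm1' & Hm2' & H10' & H20' & Hmon1' & Hmon2' & Heq' & Hz1' & Hz2').
  assert (m1 0 < m1 t) by (pose proof (N' t (proj1 Ht)); lra).
  destruct (last_zero g1 m1 0 t Hg1 Hm1 Hmon1 Hz1 (conj (Rle_refl 0) (proj1 Ht)) H) as [s [Hs [Hgs Hms]]].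
  exists s; split; [lra|].
  destruct (Heq s ltac:(lra)) as [E1 _]. destruct (Heq' s ltac:(lra)) as [E1' _].
  destruct (Hpos' s ltac:(lra)) as [P1 _].
  assert (m1' s <= m1' t) by (apply Hmon1'; lra).
  destruct (N s ltac:(lra)). destruct (N' s ltac:(lra)).
  assert (0 <= (c + r) * m2 s) by (apply Rmult_le_pos; lra).
  assert ((c + r') * m2' s <= (c + r') * M) by (apply Rmult_le_compat_l; [lra| apply HM; lra]).
  nra.
Qed.

Lemma chain2 r r' g1 g2 m1 m2 g1' g2' m1' m2' t :
  SPs r g1 g2 m1 m2 -> SPs r' g1' g2' m1' m2' ->
  0 <= t -> c * (m2 t - m2' t) > 0 ->
  exists s, 0 <= s <= t /\ - (m1 s - m1' s) >= c * (m2 t - m2' t).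
Proof.
  intros HS HS' Ht Hp.
  pose proof (sp_nonneg _ _ _ _ _ HS) as N. pose proof (sp_nonneg _ _ _ _ _ HS') as N'.
  destruct HS as (Hg1 & Hg2 & Hpos & Hm1 & Hm2 & H10 & H20 & Hmon1 & Hmon2 & Heq & Hz1 & Hz2).
  destruct HS' as (Hg1' & Hg2' & Hpos' & Hm1' & Hm2' & H10' & H20' & Hmon1' & Hmon2' & Heq' & Hz1' & Hz2').
  assert (Hp2 : m2 t - m2' t > 0).
  { apply Rnot_le_gt; intro. assert (c * (m2 t - m2' t) <= 0) by (apply mul_nonpos; lra). lra. }
  assert (m2 0 < m2 t) by (pose proof (N' t Ht); lra).
  destruct (last_zero g2 m2 0 t Hg2 Hm2 Hmon2 Hz2 (conj (Rle_refl 0) Ht) H) as [s [Hs [Hgs Hms]]].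
  exists s; split; [lra|].
  destruct (Heq s ltac:(lra)) as [_ E2]. destruct (Heq' s ltac:(lra)) as [_ E2'].
  destruct (Hpos' s ltac:(lra)) as [_ P2].
  assert (m2' s <= m2' t) by (apply Hmon2'; lra).
  assert (Hk : a2 * (m1 s - m1' s) + (m2 s - m2' s) <= 0) by lra.
  assert (c * (a2 * (m1 s - m1' s) + (m2 s - m2' s)) <= 0) by (apply mul_nonpos; lra).
  replace (c * (a2 * (m1 s - m1' s) + (m2 s - m2' s))) with ((c * a2) * (m1 s - m1' s) + c * (m2 s - m2' s)) in H1 by ring.
  rewrite Hca in H1.
  assert (c * (m2 s - m2' s) >= c * (m2 t - m2' t)).
  { apply Rle_ge. apply Rmult_le_compat_l; lra. }
  lra.
Qed.

Lemma m2_bound T : 0 <= T -> exists M, 0 <= M /\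
  forall r g1 g2 m1 m2, SPs r g1 g2 m1 m2 -> forall s, 0 <= s <= T -> m2 s <= M.
Proof.
  intros HT. destruct Hf as (Hf1 & Hf2 & Hf10 & Hf20).
  destruct (bounded_on f2 T Hf2 HT) as [B HB].
  assert (0 <= B) by (pose proof (HB 0 (conj (Rle_refl 0) HT)); pose proof (Rabs_pos (f2 0)); lra).
  exists (2 * B); split; [lra|].
  intros r g1 g2 m1 m2 HS s Hs.
  pose proof (sp_nonneg _ _ _ _ _ HS) as N.
  destruct HS as (Hg1 & Hg2 & Hpos & Hm1 & Hm2 & H10 & H20 & Hmon1 & Hmon2 & Heq & Hz1 & Hz2).
  assert (m2 s - m2 0 <= 2 * B + 0).
  { apply (incr_bound g2 m2 f2 (fun t => a2 * m1 t)); auto.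
    - intros t Ht; apply (Hpos t Ht).
    - intros t Ht; destruct (Heq t Ht) as [_ E]; rewrite E; ring.
    - lra.
    - intros u Hu. assert (m1 0 <= m1 u) by (apply Hmon1; lra).
      assert (a2 * (m1 0 - m1 u) <= 0) by (apply mul_nonpos; lra). lra.
    - intros u Hu. pose proof (HB 0 (conj (Rle_refl 0) HT)). pose proof (HB u ltac:(lra)).
      apply abs_le_iff in H0. apply abs_le_iff in H1. lra. }
  lra.
Qed.

Lemma modulus_ord T x : 0 <= T -> 0 < x -> exists d, 0 < d /\
  forall r g1 g2 m1 m2, -c <= r <= 0 -> SPs r g1 g2 m1 m2 ->
  forall u v, 0 <= u <= v -> v <= T -> v - u < d ->
  0 <= m1 v - m1 u <= x /\ 0 <= m2 v - m2 u <= x.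
Proof.
  intros HT Hx. destruct Hf as (Hf1 & Hf2 & Hf10 & Hf20).
  set (eta := x / (1 + c)).
  assert (Heta : 0 < eta) by (unfold eta; apply Rdiv_lt_0_compat; lra).
  assert (Hetax : eta + c * eta = x) by (unfold eta; field; lra).
  destruct (Heine (ext f1) (fun z => 0 <= z <= T) (compact_P3 0 T) (fun z _ => cont_ext_pt f1 Hf1 z)
     (mkposreal eta Heta)) as [d1 Hd1].
  destruct (Heine (ext f2) (fun z => 0 <= z <= T) (compact_P3 0 T) (fun z _ => cont_ext_pt f2 Hf2 z)
     (mkposreal eta Heta)) as [d2 Hd2].
  simpl in Hd1, Hd2.
  exists (Rmin d1 d2); split; [apply Rmin_pos; apply cond_pos|].
  intros r g1 g2 m1 m2 Hr HS u v Huv HvT Hd.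
  pose proof (Rmin_l d1 d2). pose proof (Rmin_r d1 d2).
  pose proof (sp_nonneg _ _ _ _ _ HS) as N.
  destruct HS as (Hg1 & Hg2 & Hpos & Hm1 & Hm2 & H10 & H20 & Hmon1 & Hmon2 & Heq & Hz1 & Hz2).
  assert (F1 : forall w, u <= w <= v -> f1 u - f1 w <= eta).
  { intros w Hw. assert (Rabs (u - w) < d1) by (apply abs_lt_iff; lra).
    specialize (Hd1 u w ltac:(lra) ltac:(lra) H1). unfold ext in Hd1.
    rewrite !Rmax_right in Hd1 by lra. apply abs_lt_iff in Hd1; lra. }
  assert (F2 : forall w, u <= w <= v -> f2 u - f2 w <= eta).
  { intros w Hw. assert (Rabs (u - w) < d2) by (apply abs_lt_iff; lra).
    specialize (Hd2 u w ltac:(lra) ltac:(lra) H1). unfold ext in Hd2.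
    rewrite !Rmax_right in Hd2 by lra. apply abs_lt_iff in Hd2; lra. }
  assert (M2 : forall w, u <= w <= v -> m2 w - m2 u <= eta + 0).
  { intros w Hw. apply (incr_bound g2 m2 f2 (fun t => a2 * m1 t)); auto.
    - intros t Ht; apply (Hpos t Ht).
    - intros t Ht; destruct (Heq t Ht) as [_ E]; rewrite E; ring.
    - lra.
    - intros z Hz. assert (m1 u <= m1 z) by (apply Hmon1; lra).
      assert (a2 * (m1 u - m1 z) <= 0) by (apply mul_nonpos; lra). lra.
    - intros z Hz. apply F2; lra. }
  assert (M1 : m1 v - m1 u <= eta + c * eta).
  { apply (incr_bound g1 m1 f1 (fun t => r * m2 t)); auto.
    - intros t Ht; apply (Hpos t Ht).
    - intros t Ht; destruct (Heq t Ht) as [E _]; rewrite E; ring.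
    - intros z Hz. assert (m2 u <= m2 z) by (apply Hmon2; lra).
      specialize (M2 z Hz).
      assert ((- r) * (m2 z - m2 u) <= c * eta).
      { apply Rle_trans with (c * (m2 z - m2 u)).
        apply Rmult_le_compat_r; lra. apply Rmult_le_compat_l; lra. }
      lra. }
  assert (m1 u <= m1 v) by (apply Hmon1; lra).
  assert (m2 u <= m2 v) by (apply Hmon2; lra).
  specialize (M2 v ltac:(lra)).
  assert (eta <= x) by (assert (0 <= c * eta) by (apply Rmult_le_pos; lra); lra).
  lra.
Qed.

Lemma modulus T x : 0 <= T -> 0 < x -> exists d, 0 < d /\
  forall r g1 g2 m1 m2, -c <= r <= 0 -> SPs r g1 g2 m1 m2 ->
  forall u v, 0 <= u <= T -> 0 <= v <= T -> Rabs (u - v) < d ->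
  Rabs (m1 u - m1 v) <= x /\ Rabs (m2 u - m2 v) <= x.
Proof.
  intros HT Hx. destruct (modulus_ord T x HT Hx) as [d [Hd H]].
  exists d; split; auto.
  intros r g1 g2 m1 m2 Hr HS u v Hu Hv Huv. apply abs_lt_iff in Huv.
  destruct (Rle_dec u v).
  - destruct (H r g1 g2 m1 m2 Hr HS u v ltac:(lra) ltac:(lra) ltac:(lra)).
    split; apply abs_le_iff; lra.
  - destruct (H r g1 g2 m1 m2 Hr HS v u ltac:(lra) ltac:(lra) ltac:(lra)).
    split; apply abs_le_iff; lra.
Qed.

Theorem stability T x : 0 <= T -> 0 < x -> exists e, 0 < e /\
  forall r r' g1 g2 m1 m2 g1' g2' m1' m2',
  -c <= r <= 0 -> -c <= r' <= 0 -> c + r <= e -> c + r' <= e ->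
  SPs r g1 g2 m1 m2 -> SPs r' g1' g2' m1' m2' ->
  forall t, 0 <= t <= T -> Rabs (m1 t - m1' t) < x /\ Rabs (c * (m2 t - m2' t)) < x.
Proof.
  intros HT Hx.
  destruct (modulus T (x/4) HT ltac:(lra)) as [d [Hd Hmod]].
  destruct (m2_bound T HT) as [M [HM0 HM]].
  destruct (INR_archimed d T Hd) as [n Hn].
  assert (0 <= INR n) by apply pos_INR.
  set (e := x / (16 * (INR n + 1) * (M + 1))).
  assert (He : 0 < e) by (unfold e; apply Rdiv_lt_0_compat; [lra|]; apply Rmult_lt_0_compat; lra).
  exists e; split; auto.
  intros r r' g1 g2 m1 m2 g1' g2' m1' m2' Hr Hr' Her Her' HS HS' t Ht.
  set (err := (c + r') * M + (c + r) * M).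
  assert (Herr0 : 0 <= err) by (unfold err; assert (0 <= (c+r') * M) by (apply Rmult_le_pos; lra);
     assert (0 <= (c+r) * M) by (apply Rmult_le_pos; lra); lra).
  assert (Herr : 4 * INR n * err <= x / 2).
  { assert (err <= 2 * e * M).
    { unfold err. assert ((c + r') * M <= e * M) by (apply Rmult_le_compat_r; lra).
      assert ((c + r) * M <= e * M) by (apply Rmult_le_compat_r; lra). lra. }
    assert (8 * INR n * e * M <= x / 2).
    { unfold e. replace (8 * INR n * (x / (16 * (INR n + 1) * (M + 1))) * M)
        with ((x / 2) * ((INR n * M) / ((INR n + 1) * (M + 1)))) by (field; lra).
      assert (INR n * M / ((INR n + 1) * (M + 1)) <= 1).
      { apply Rmult_le_reg_r with ((INR n + 1) * (M + 1)). apply Rmult_lt_0_compat; lra.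
        unfold Rdiv. rewrite Rmult_assoc, Rinv_l. nra. apply Rgt_not_eq; apply Rmult_lt_0_compat; lra. }
      assert (0 <= INR n * M / ((INR n + 1) * (M + 1))).
      { unfold Rdiv. apply Rmult_le_pos. apply Rmult_le_pos; lra. apply Rlt_le, Rinv_0_lt_compat, Rmult_lt_0_compat; lra. }
      nra. }
    assert (4 * INR n * err <= 4 * INR n * (2 * e * M)) by (apply Rmult_le_compat_l; lra).
    lra. }
  apply (chain_bound2 (fun t => m1 t - m1' t) (fun t => c * (m2 t - m2' t)) T err x d n); auto.
  - intros t0 Ht0 Hp. destruct (chain1 r r' g1 g2 m1 m2 g1' g2' m1' m2' T M t0 Hr Hr' HS HS'
      (fun s Hs => HM _ _ _ _ _ HS' s Hs) Ht0 Hp) as [s [Hs Hs2]].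
    exists s; split; auto. assert (0 <= (c + r) * M) by (apply Rmult_le_pos; lra). unfold err; lra.
  - intros t0 Ht0 Hp. destruct (chain2 r r' g1 g2 m1 m2 g1' g2' m1' m2' t0 HS HS' ltac:(lra) Hp)
      as [s [Hs Hs2]]. exists s; split; auto.
  - intros t0 Ht0 Hp. destruct (chain1 r' r g1' g2' m1' m2' g1 g2 m1 m2 T M t0 Hr' Hr HS' HS
      (fun s Hs => HM _ _ _ _ _ HS s Hs) Ht0 ltac:(lra)) as [s [Hs Hs2]].
    exists s; split; auto. assert (0 <= (c + r') * M) by (apply Rmult_le_pos; lra). unfold err.
    replace (c * (m2' s - m2 s)) with (- (c * (m2 s - m2' s))) in Hs2 by ring. lra.
  - intros t0 Ht0 Hp. destruct (chain2 r' r g1' g2' m1' m2' g1 g2 m1 m2 t0 HS' HS ltac:(lra)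
      ltac:(replace (c * (m2' t0 - m2 t0)) with (- (c * (m2 t0 - m2' t0))) by ring; lra))
      as [s [Hs Hs2]]. exists s; split; auto.
    replace (c * (m2' t0 - m2 t0)) with (- (c * (m2 t0 - m2' t0))) in Hs2 by ring. lra.
  - intros u v Hu Hv Huv.
    destruct (Hmod r g1 g2 m1 m2 Hr HS u v Hu Hv Huv) as [A _].
    destruct (Hmod r' g1' g2' m1' m2' Hr' HS' u v Hu Hv Huv) as [B _].
    apply abs_le_iff in A; apply abs_le_iff in B; apply abs_lt_iff; lra.
Qed.


Definition FP b m1 m2 := cont_nonneg m1 /\ cont_nonneg m2 /\
  forall t, 0 <= t -> m1 t = Phi (fun s => f1 s - b * m2 s) t /\ m2 t = Phi (fun s => f2 s + a2 * m1 s) t.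

Lemma FP_SP b m1 m2 : 0 <= b -> FP b m1 m2 ->
  SPs (- b) (fun t => f1 t + (1 * m1 t + (- b) * m2 t)) (fun t => f2 t + (a2 * m1 t + 1 * m2 t)) m1 m2.
Proof.
  intros Hb (Hm1 & Hm2 & HE). destruct Hf as (Hf1 & Hf2 & Hf10 & Hf20).
  assert (Hx1 : cont_nonneg (fun s => f1 s - b * m2 s)) by (apply cont_sub_scal; auto).
  assert (Hx2 : cont_nonneg (fun s => f2 s + a2 * m1 s)) by (apply cont_add_scal; auto).
  assert (Z2 : m2 0 = 0).
  { destruct (HE 0 (Rle_refl 0)) as [E1 E2].
    assert (0 <= m1 0) by (rewrite E1; apply Phi_ge0; auto).
    apply Rle_antisym.
    - rewrite E2. apply Phi_le; auto; [lra|]. intros s Hs. assert (s = 0) by lra. subst.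
      assert (0 <= a2 * m1 0) by (apply Rmult_le_pos; lra). lra.
    - rewrite E2; apply Phi_ge0; auto. }
  assert (Z1 : m1 0 = 0).
  { destruct (HE 0 (Rle_refl 0)) as [E1 E2].
    apply Rle_antisym.
    - rewrite E1. apply Phi_le; auto; [lra|]. intros s Hs. assert (s = 0) by lra. subst.
      rewrite Z2. lra.
    - rewrite E1; apply Phi_ge0; auto. }
  unfold SPs, SP_solution.
  split; [apply cont_plus; [auto| apply cont_lin; auto]|].
  split; [apply cont_plus; [auto| apply cont_lin; auto]|].
  split.
  { intros t Ht. destruct (HE t Ht) as [E1 E2]. split.
    - pose proof (Phi_ge _ t t Hx1 (conj Ht (Rle_refl t))). rewrite <- E1 in H. lra.
    - pose proof (Phi_ge _ t t Hx2 (conj Ht (Rle_refl t))). rewrite <- E2 in H. lra. }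
  split; auto. split; auto. split; auto. split; auto.
  split.
  { intros s t Hs Hst. destruct (HE s Hs) as [E1 _]. destruct (HE t ltac:(lra)) as [E1' _].
    rewrite E1, E1'. apply Phi_mono; auto. }
  split.
  { intros s t Hs Hst. destruct (HE s Hs) as [_ E2]. destruct (HE t ltac:(lra)) as [_ E2'].
    rewrite E2, E2'. apply Phi_mono; auto. }
  split.
  { intros t Ht; split; reflexivity. }
  split.
  { intros s t Hs Hst Hlt. destruct (HE s Hs) as [E1 _]. destruct (HE t ltac:(lra)) as [E1' _].
    rewrite E1, E1' in Hlt. destruct (Phi_comp _ s t Hx1 (conj Hs Hst) Hlt) as [u [Hu Hu2]].
    exists u; split; auto. destruct (HE u ltac:(lra)) as [E1u _]. rewrite E1u. lra. }
  { intros s t Hs Hst Hlt. destruct (HE s Hs) as [_ E2]. destruct (HE t ltac:(lra)) as [_ E2'].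
    rewrite E2, E2' in Hlt. destruct (Phi_comp _ s t Hx2 (conj Hs Hst) Hlt) as [u [Hu Hu2]].
    exists u; split; auto. destruct (HE u ltac:(lra)) as [_ E2u]. rewrite E2u. lra. }
Qed.

Fixpoint it1 (b : R) (n : nat) : R -> R :=
  match n with
  | O => fun _ => 0
  | S n => Phi (fun s => f1 s - b * Phi (fun r => f2 r + a2 * it1 b n r) s)
  end.
Definition it2 b n := Phi (fun r => f2 r + a2 * it1 b n r).

Lemma it_cont b n : cont_nonneg (it1 b n) /\ cont_nonneg (it2 b n).
Proof.
  destruct Hf as (Hf1 & Hf2 & _ & _).
  induction n as [|n IH].
  - assert (cont_nonneg (it1 b 0)) by apply cont_const.
    split; auto. apply Phi_cont. apply cont_add_scal; auto.
  - assert (H : cont_nonneg (it1 b (S n))).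
    { apply (Phi_cont (fun s => f1 s - b * it2 b n s)). apply cont_sub_scal; tauto. }
    split; auto. apply Phi_cont. apply cont_add_scal; auto.
Qed.

Lemma it_step b n t : 0 <= b -> 0 <= t -> forall s, 0 <= s <= t ->
  Rabs (it1 b (S n) s - it1 b n s) <= (b * a2) ^ n * it1 b 1 t.
Proof.
  intros Hb Ht. destruct Hf as (Hf1 & Hf2 & _ & _).
  assert (HC : 0 <= it1 b 1 t) by (apply (Phi_ge0 (fun s => f1 s - b * it2 b 0 s)); apply cont_sub_scal; [exact (proj1 Hf)|apply it_cont]).
  assert (Hk : 0 <= b * a2) by (apply Rmult_le_pos; lra).
  induction n as [|n IH]; intros s Hs.
  - change (it1 b 0 s) with 0. simpl pow. rewrite Rminus_0_r, Rmult_1_l.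
    assert (0 <= it1 b 1 s) by (apply (Phi_ge0 (fun s => f1 s - b * it2 b 0 s)); apply cont_sub_scal; [exact (proj1 Hf)|apply it_cont]).
    assert (it1 b 1 s <= it1 b 1 t) by (apply (Phi_mono (fun s => f1 s - b * it2 b 0 s)); [|lra];
       apply cont_sub_scal; auto; apply it_cont).
    rewrite Rabs_right; lra.
  - pose proof (pow_le _ n Hk) as Hkn.
    change (it1 b (S (S n)) s) with (Phi (fun s => f1 s - b * it2 b (S n) s) s).
    change (it1 b (S n) s) with (Phi (fun s => f1 s - b * it2 b n s) s).
    replace ((b * a2) ^ S n * it1 b 1 t) with (b * (a2 * ((b * a2) ^ n * it1 b 1 t))) by (rewrite <- tech_pow_Rmult; ring).
    apply Phi_lip.
    + apply cont_sub_scal; auto; apply it_cont.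
    + apply cont_sub_scal; auto; apply it_cont.
    + apply Rmult_le_pos; auto. apply Rmult_le_pos; [lra|]. apply Rmult_le_pos; auto.
    + intros w Hw.
      replace (f1 w - b * it2 b (S n) w - (f1 w - b * it2 b n w)) with (b * (it2 b n w - it2 b (S n) w)) by ring.
      rewrite Rabs_mult, (Rabs_right b) by lra. rewrite Rabs_minus_sym.
      apply Rmult_le_compat_l; auto.
      unfold it2. apply Phi_lip.
      * apply cont_add_scal; auto; apply it_cont.
      * apply cont_add_scal; auto; apply it_cont.
      * apply Rmult_le_pos; [lra|]. apply Rmult_le_pos; auto.
      * intros q Hq.
        replace (f2 q + a2 * it1 b (S n) q - (f2 q + a2 * it1 b n q)) with (a2 * (it1 b (S n) q - it1 b n q)) by ring.
        rewrite Rabs_mult, (Rabs_right a2) by lra.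
        apply Rmult_le_compat_l; [lra|]. apply IH. lra.
Qed.

Lemma it_cauchy b n p t : 0 <= b -> b * a2 < 1 -> 0 <= t -> forall s, 0 <= s <= t ->
  Rabs (it1 b (n + p) s - it1 b n s) <= it1 b 1 t * (b * a2) ^ n / (1 - b * a2).
Proof.
  intros Hb Hk1 Ht s Hs.
  assert (HC : 0 <= it1 b 1 t) by (apply (Phi_ge0 (fun s => f1 s - b * it2 b 0 s)); apply cont_sub_scal; [exact (proj1 Hf)|apply it_cont]).
  assert (Hk : 0 <= b * a2) by (apply Rmult_le_pos; lra).
  assert (G : Rabs (it1 b (n + p) s - it1 b n s) <=
     it1 b 1 t * ((b * a2) ^ n - (b * a2) ^ (n + p)) / (1 - b * a2)).
  { induction p as [|p IH].
    - rewrite Nat.add_0_r. replace (it1 b n s - it1 b n s) with 0 by ring.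
      replace ((b * a2) ^ n - (b * a2) ^ n) with 0 by ring. rewrite Rabs_R0.
      unfold Rdiv; rewrite Rmult_0_r, Rmult_0_l; lra.
    - rewrite Nat.add_succ_r.
      pose proof (it_step b (n + p) t Hb Ht s Hs).
      pose proof (Rabs_triang (it1 b (S (n + p)) s - it1 b (n + p) s) (it1 b (n + p) s - it1 b n s)).
      replace (it1 b (S (n + p)) s - it1 b (n + p) s + (it1 b (n + p) s - it1 b n s))
        with (it1 b (S (n + p)) s - it1 b n s) in H0 by ring.
      replace (it1 b 1 t * ((b * a2) ^ n - (b * a2) ^ S (n + p)) / (1 - b * a2))
        with (it1 b 1 t * ((b * a2) ^ n - (b * a2) ^ (n + p)) / (1 - b * a2) + (b * a2) ^ (n + p) * it1 b 1 t)
        by (rewrite <- tech_pow_Rmult; field; lra).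
      lra. }
  eapply Rle_trans; [exact G|].
  unfold Rdiv. apply Rmult_le_compat_r. apply Rlt_le, Rinv_0_lt_compat; lra.
  apply Rmult_le_compat_l; auto. pose proof (pow_le _ (n + p) Hk). lra.
Qed.

Lemma exists_contr b : 0 <= b -> b * a2 < 1 -> exists m1 m2, FP b m1 m2.
Proof.
  intros Hb Hk1.
  assert (Hk : 0 <= b * a2) by (apply Rmult_le_pos; lra).
  destruct Hf as (Hf1 & Hf2 & _ & _).
  assert (HU : forall T eps, 0 <= T -> 0 < eps -> exists N, forall n m, (N <= n)%nat -> (N <= m)%nat ->
      forall s, 0 <= s <= T -> Rabs (it1 b n s - it1 b m s) <= eps).
  { intros T eps HT He.
    assert (HC : 0 <= it1 b 1 T) by (apply (Phi_ge0 (fun s => f1 s - b * it2 b 0 s)); apply cont_sub_scal; [exact (proj1 Hf)|apply it_cont]).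
    assert (Hy : 0 < eps * (1 - b * a2) / (it1 b 1 T + 1)).
    { apply Rdiv_lt_0_compat; [apply Rmult_lt_0_compat|]; lra. }
    destruct (pow_lt_1_zero (b * a2) ltac:(rewrite Rabs_right; lra) _ Hy) as [N HN].
    exists N. intros n m Hn Hm s Hs.
    assert (Hgen : forall n m, (N <= n)%nat -> (n <= m)%nat -> Rabs (it1 b m s - it1 b n s) <= eps).
    { intros n0 m0 Hn0 Hnm0. replace m0 with (n0 + (m0 - n0))%nat by lia.
      eapply Rle_trans; [apply (it_cauchy b n0 (m0 - n0) T); auto; lra|].
      specialize (HN n0 Hn0). rewrite Rabs_right in HN by (apply Rle_ge, pow_le; auto).
      apply Rmult_le_reg_r with (1 - b * a2); [lra|].
      unfold Rdiv. rewrite Rmult_assoc, Rinv_l, Rmult_1_r by lra.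
      apply Rle_trans with (it1 b 1 T * (eps * (1 - b * a2) / (it1 b 1 T + 1))).
      apply Rmult_le_compat_l; lra.
      replace (it1 b 1 T * (eps * (1 - b * a2) / (it1 b 1 T + 1))) with
        ((eps * (1 - b * a2)) * (it1 b 1 T / (it1 b 1 T + 1))) by (field; lra).
      assert (it1 b 1 T / (it1 b 1 T + 1) <= 1).
      { apply Rmult_le_reg_r with (it1 b 1 T + 1); [lra|]. unfold Rdiv.
        rewrite Rmult_assoc, Rinv_l; lra. }
      assert (0 <= eps * (1 - b * a2)) by (apply Rmult_le_pos; lra).
      nra. }
    destruct (Nat.le_ge_cases n m) as [Hnm|Hnm].
    - rewrite Rabs_minus_sym. apply Hgen; auto.
    - apply Hgen; auto. }
  destruct (ucauchy_limit _ HU) as [m1 Hm1].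
  assert (Cm1 : cont_nonneg m1) by (apply (ulim_cont (it1 b)); auto; intros; apply it_cont).
  set (m2 := Phi (fun r => f2 r + a2 * m1 r)).
  assert (Cx2 : cont_nonneg (fun r => f2 r + a2 * m1 r)) by (apply cont_add_scal; auto).
  assert (Cm2 : cont_nonneg m2) by (apply Phi_cont; auto).
  exists m1, m2. split; auto. split; auto. intros t Ht. split; [|reflexivity].
  apply (eq_of_small _ _ 2); [lra|]. intros eps He.
  destruct (Hm1 t eps Ht He) as [N HN].
  pose proof (HN (S N) (le_S _ _ (le_n N)) t (conj Ht (Rle_refl t))) as A.
  change (it1 b (S N) t) with (Phi (fun s => f1 s - b * it2 b N s) t) in A.
  assert (B : Rabs (Phi (fun s => f1 s - b * it2 b N s) t - Phi (fun s => f1 s - b * m2 s) t) <= b * (a2 * eps)).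
  { apply Phi_lip.
    - apply cont_sub_scal; auto; apply it_cont.
    - apply cont_sub_scal; auto.
    - apply Rmult_le_pos; [lra|]; apply Rmult_le_pos; lra.
    - intros r Hr.
      replace (f1 r - b * it2 b N r - (f1 r - b * m2 r)) with (b * (m2 r - it2 b N r)) by ring.
      rewrite Rabs_mult, (Rabs_right b) by lra. rewrite Rabs_minus_sym. apply Rmult_le_compat_l; auto.
      unfold it2, m2. apply Phi_lip.
      + apply cont_add_scal; auto; apply it_cont.
      + auto.
      + apply Rmult_le_pos; lra.
      + intros q Hq.
        replace (f2 q + a2 * it1 b N q - (f2 q + a2 * m1 q)) with (a2 * (it1 b N q - m1 q)) by ring.
        rewrite Rabs_mult, (Rabs_right a2) by lra. apply Rmult_le_compat_l; [lra|].
        apply HN; auto; lra. }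
  replace (b * (a2 * eps)) with ((b * a2) * eps) in B by ring.
  assert (b * a2 * eps <= eps) by nra.
  apply abs_le_iff in A; apply abs_le_iff in B; apply abs_le_iff. lra.
Qed.

Lemma div_le_helper x y e : 0 < x -> y <= e * x -> y / x <= e.
Proof.
  intros Hx H. unfold Rdiv. apply Rmult_le_reg_r with x; auto.
  rewrite Rmult_assoc, Rinv_l; lra.
Qed.

Definition bn (n : nat) := c * (1 - / (INR n + 2)).

Lemma bn_props n : 0 <= bn n /\ bn n <= c /\ bn n * a2 < 1 /\ c + - bn n = c / (INR n + 2).
Proof.
  pose proof (pos_INR n). unfold bn.
  assert (Hi : 0 < / (INR n + 2)) by (apply Rinv_0_lt_compat; lra).
  assert (Hi2 : / (INR n + 2) <= 1).
  { apply Rmult_le_reg_r with (INR n + 2); [lra|]. rewrite Rinv_l; lra. }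
  split; [apply Rmult_le_pos; lra|].
  split; [nra|].
  split.
  - replace (c * (1 - / (INR n + 2)) * a2) with ((c * a2) * (1 - / (INR n + 2))) by ring.
    rewrite Hca. lra.
  - field. lra.
Qed.

Lemma bn_small e : 0 < e -> exists N, forall n, (N <= n)%nat -> c + - bn n <= e.
Proof.
  intros He. destruct (INR_archimed e c He) as [N HN]. exists N. intros n Hn.
  destruct (bn_props n) as (_ & _ & _ & E). rewrite E.
  apply le_INR in Hn. apply div_le_helper. pose proof (pos_INR n); lra.
  assert (e * INR N <= e * INR n) by (apply Rmult_le_compat_l; lra). lra.
Qed.

Lemma exists_final : exists m1 m2, FP c m1 m2.
Proof.
  assert (Hex : forall n, exists p : (R -> R) * (R -> R), FP (bn n) (fst p) (snd p)).
  { intros n. destruct (bn_props n) as (H1 & H2 & H3 & H4).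
    destruct (exists_contr (bn n) H1 H3) as [m1 [m2 H]]. exists (m1, m2); exact H. }
  set (sol := fun n => proj1_sig (constructive_indefinite_description _ (Hex n))).
  assert (Hsol : forall n, FP (bn n) (fst (sol n)) (snd (sol n))) by (intros n; unfold sol; apply proj2_sig).
  set (u1 := fun n => fst (sol n)). set (u2 := fun n => snd (sol n)).
  assert (Hsol' : forall n, FP (bn n) (u1 n) (u2 n)) by exact Hsol.
  clearbody u1 u2. clear Hsol. rename Hsol' into Hsol.
  assert (HSP : forall n, exists g1 g2, SPs (- bn n) g1 g2 (u1 n) (u2 n)).
  { intros n. eexists; eexists. apply FP_SP. apply bn_props. apply Hsol. }
  assert (Hr : forall n, - c <= - bn n <= 0) by (intros n; destruct (bn_props n) as (? & ? & _); lra).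
  assert (C1 : forall T eps, 0 <= T -> 0 < eps -> exists N, forall n m, (N <= n)%nat -> (N <= m)%nat ->
      forall s, 0 <= s <= T -> Rabs (u1 n s - u1 m s) <= eps).
  { intros T eps HT He. destruct (stability T eps HT He) as [e [He' Hst]].
    destruct (bn_small e He') as [N HN]. exists N. intros n m Hn Hm s Hs.
    destruct (HSP n) as [g1 [g2 H1]]. destruct (HSP m) as [g1' [g2' H2]].
    destruct (Hst _ _ _ _ _ _ _ _ _ _ (Hr n) (Hr m) (HN n Hn) (HN m Hm) H1 H2 s Hs). lra. }
  assert (C2 : forall T eps, 0 <= T -> 0 < eps -> exists N, forall n m, (N <= n)%nat -> (N <= m)%nat ->
      forall s, 0 <= s <= T -> Rabs (u2 n s - u2 m s) <= eps).
  { intros T eps HT He. destruct (stability T (c * eps) HT ltac:(apply Rmult_lt_0_compat; lra)) as [e [He' Hst]].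
    destruct (bn_small e He') as [N HN]. exists N. intros n m Hn Hm s Hs.
    destruct (HSP n) as [g1 [g2 H1]]. destruct (HSP m) as [g1' [g2' H2]].
    destruct (Hst _ _ _ _ _ _ _ _ _ _ (Hr n) (Hr m) (HN n Hn) (HN m Hm) H1 H2 s Hs) as [_ A].
    rewrite Rabs_mult, (Rabs_right c) in A by lra.
    apply Rmult_lt_reg_l in A; lra. }
  destruct (ucauchy_limit _ C1) as [M1 L1].
  destruct (ucauchy_limit _ C2) as [M2 L2].
  assert (CM1 : cont_nonneg M1) by (apply (ulim_cont u1); auto; intros n; apply (Hsol n)).
  assert (CM2 : cont_nonneg M2) by (apply (ulim_cont u2); auto; intros n; apply (Hsol n)).
  destruct Hf as (Hf1 & Hf2 & _ & _).
  exists M1, M2. split; auto. split; auto. intros t Ht.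
  destruct (bounded_on M2 t CM2 Ht) as [B HB].
  assert (HB0 : 0 <= B) by (pose proof (HB 0 (conj (Rle_refl 0) Ht)); pose proof (Rabs_pos (M2 0)); lra).
  split.
  - apply (eq_of_small _ _ (1 + c + B)); [lra|]. intros eps He.
    destruct (L1 t eps Ht He) as [N1 HN1]. destruct (L2 t eps Ht He) as [N2 HN2].
    destruct (bn_small eps He) as [N3 HN3].
    set (n := max N1 (max N2 N3)).
    assert (n1 : (N1 <= n)%nat) by lia. assert (n2 : (N2 <= n)%nat) by lia. assert (n3 : (N3 <= n)%nat) by lia.
    destruct (Hsol n) as (Cu1 & Cu2 & E). destruct (E t Ht) as [E1 _].
    pose proof (HN1 n n1 t (conj Ht (Rle_refl t))) as A.
    rewrite E1 in A.
    destruct (bn_props n) as (b0 & b1 & _ & _). specialize (HN3 n n3).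
    assert (B' : Rabs (Phi (fun s => f1 s - bn n * u2 n s) t - Phi (fun s => f1 s - c * M2 s) t)
       <= bn n * eps + (c - bn n) * B).
    { apply Phi_lip.
      - apply cont_sub_scal; auto.
      - apply cont_sub_scal; auto.
      - assert (0 <= bn n * eps) by (apply Rmult_le_pos; lra).
        assert (0 <= (c - bn n) * B) by (apply Rmult_le_pos; lra). lra.
      - intros w Hw.
        replace (f1 w - bn n * u2 n w - (f1 w - c * M2 w)) with (bn n * (M2 w - u2 n w) + (c - bn n) * M2 w) by ring.
        eapply Rle_trans; [apply Rabs_triang|].
        rewrite !Rabs_mult, (Rabs_right (bn n)), (Rabs_right (c - bn n)) by lra.
        rewrite Rabs_minus_sym.
        apply Rplus_le_compat; apply Rmult_le_compat; try lra; try apply Rabs_pos.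
        + apply HN2; auto; lra.
        + apply HB; lra. }
    assert (bn n * eps <= c * eps) by (apply Rmult_le_compat_r; lra).
    assert ((c - bn n) * B <= eps * B) by (apply Rmult_le_compat_r; lra).
    apply abs_le_iff in A. apply abs_le_iff in B'. apply abs_le_iff. lra.
  - apply (eq_of_small _ _ (1 + a2)); [lra|]. intros eps He.
    destruct (L1 t eps Ht He) as [N1 HN1]. destruct (L2 t eps Ht He) as [N2 HN2].
    set (n := max N1 N2).
    assert (n1 : (N1 <= n)%nat) by lia. assert (n2 : (N2 <= n)%nat) by lia.
    destruct (Hsol n) as (Cu1 & Cu2 & E). destruct (E t Ht) as [_ E2].
    pose proof (HN2 n n2 t (conj Ht (Rle_refl t))) as A.
    rewrite E2 in A.
    assert (B' : Rabs (Phi (fun s => f2 s + a2 * u1 n s) t - Phi (fun s => f2 s + a2 * M1 s) t) <= a2 * eps).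
    { apply Phi_lip.
      - apply cont_add_scal; auto.
      - apply cont_add_scal; auto.
      - apply Rmult_le_pos; lra.
      - intros w Hw.
        replace (f2 w + a2 * u1 n w - (f2 w + a2 * M1 w)) with (a2 * (u1 n w - M1 w)) by ring.
        rewrite Rabs_mult, (Rabs_right a2) by lra. apply Rmult_le_compat_l; [lra|].
        apply HN1; auto; lra. }
    apply abs_le_iff in A. apply abs_le_iff in B'. apply abs_le_iff. lra.
Qed.

End Main.

Theorem theorem3p2 (a1 a2 : R) :
  Rabs (a1 * a2) = 1 -> 0 < a2 -> a1 < 0 ->
  forall f1 f2 : R -> R, driving f1 f2 ->
    SP_unique_solution 1 a1 a2 1 f1 f2.
Proof.
  intros Habs Ha2 Ha1 f1 f2 Hf.
  assert (Hc : 0 < - a1) by lra.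
  assert (Hca : - a1 * a2 = 1).
  { assert (a1 * a2 < 0) by nra. rewrite Rabs_left in Habs by lra. lra. }
  split.
  - destruct (exists_final a2 (- a1) f1 f2 Hc Hca Ha2 Hf) as [m1 [m2 H]].
    pose proof (FP_SP a2 f1 f2 Ha2 Hf (- a1) m1 m2 ltac:(lra) H) as HS.
    unfold SPs in HS. rewrite Ropp_involutive in HS.
    eexists; eexists; eexists; eexists; exact HS.
  - intros g1 g2 m1 m2 g1' g2' m1' m2' HS HS' t Ht.
    assert (E1 : m1 t = m1' t /\ m2 t = m2' t).
    { assert (K : forall x, 0 < x -> Rabs (m1 t - m1' t) < x /\ Rabs (- a1 * (m2 t - m2' t)) < x).
      { intros x Hx. destruct (stability a2 (- a1) f1 f2 Hc Hca Ha2 Hf t x Ht Hx) as [e [He Hst]].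
        apply (Hst a1 a1 g1 g2 m1 m2 g1' g2' m1' m2'); auto; lra. }
      split.
      - apply (eq_of_small _ _ 1); [lra|]. intros eps He. destruct (K eps He). lra.
      - apply (eq_of_small _ _ 1); [lra|].
        intros eps He. destruct (K (- a1 * eps)) as [_ A]. apply Rmult_lt_0_compat; lra.
        rewrite Rabs_mult, (Rabs_right (- a1)) in A by lra.
        apply Rmult_lt_reg_l in A; lra. }
    destruct E1 as [E1 E2].
    destruct HS as (_ & _ & _ & _ & _ & _ & _ & _ & _ & Heq & _).
    destruct HS' as (_ & _ & _ & _ & _ & _ & _ & _ & _ & Heq' & _).
    destruct (Heq t Ht) as [G1 G2]. destruct (Heq' t Ht) as [G1' G2'].
    rewrite G1, G2, G1', G2', E1, E2. repeat split; reflexivity.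
Qed.
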